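(* For each $t=0,\ldots,T$ and each node $\mu\in\Omega_t$, the set $\mathcal{Z}^{\mathrm{bd}\mu}_t$ from the construction in the context is a polyhedral convex set whose recession cone is $\mathcal{Q}^\mu_t$.
   Context: Finite filtered probability space $(\Omega,\mathcal{F},\mathbb{P};(\mathcal{F}_t)_{t=0}^T)$, $\mathcal{F}_0$ trivial, $\mathcal{F}_T=2^\Omega$, $\mathbb{P}(\{\omega\})>0$. $\Omega_t$: atoms (nodes) of $\mathcal{F}_t$; $\mathrm{succ}\,\mu=\{\nu\in\Omega_{t+1}:\nu\subseteq\mu\}$. $\mathcal{L}_t$: $\mathcal{F}_t$-measurable $\mathbb{R}^d$-valued random variables. $d$ assets, $\mathcal{F}_t$-measurable exchange rates $\pi^{jk}_t>0$, $\pi^{jj}_t=1$. $\mathcal{K}^\mu_t$: convex cone generated by $e^1,\ldots,e^d$ and $\pi^{jk}_t(\mu)e^j-e^k$; $\mathcal{K}_t=\{x\in\mathcal{L}_t:x(\mu)\in\mathcal{K}^\mu_t\ \forall\mu\}$. Deferred solvency cone $\mathcal{Q}_t$: $z\in\mathcal{L}_t$ for which there exist $y_{t+1},\ldots,y_{T+1}$, $y_s\in\mathcal{L}_{s-1}$, $y_{T+1}=0$, with $z-y_{t+1}\in\mathcal{K}_t$, $y_s-y_{s+1}\in\mathcal{K}_s$ ($s=t+1,\ldots,T$); $\mathcal{Q}^\mu_t=\{z(\mu):z\in\mathcal{Q}_t\}$. American option: adapted $\mathbb{R}^d$-valued $\xi=(\xi_t)_{t=0}^T$. The recession cone of a nonempty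 convex $A\subseteq\mathbb{R}^d$ is $\{y: A+\lambda y\subseteq A\ \forall\lambda\ge0\}$. Construction (nodewise): $\mathcal{U}^{\mathrm{bd}\mu}_t=-\xi_t(\mu)+\mathcal{Q}^\mu_t$ for all $t,\mu$; for $\mu\in\Omega_T$, $\mathcal{Z}^{\mathrm{bd}\mu}_T=\mathcal{V}^{\mathrm{bd}\mu}_T=\mathcal{W}^{\mathrm{bd}\mu}_T=\mathcal{U}^{\mathrm{bd}\mu}_T$; backwards for $t<T$, $\mu\in\Omega_t$: $\mathcal{W}^{\mathrm{bd}\mu}_t=\bigcap_{\nu\in\mathrm{succ}\,\mu}\mathcal{Z}^{\mathrm{bd}\nu}_{t+1}$, $\mathcal{V}^{\mathrm{bd}\mu}_t=\mathcal{W}^{\mathrm{bd}\mu}_t+\mathcal{Q}^\mu_t$, $\mathcal{Z}^{\mathrm{bd}\mu}_t=\mathrm{conv}\{\mathcal{U}^{\mathrm{bd}\mu}_t,\mathcal{V}^{\mathrm{bd}\mu}_t\}$ (the smallest convex set containing both). Standing assumption: no arbitrage (no predictable $y$ with $y_0=0$, $y_{T+1}=0$, $y_t-y_{t+1}\in\mathcal{K}_t$ for $t<T$ and $y_T-x\in\mathcal{K}_T$ for a nonzero componentwise non-negative $x\in\mathcal{L}_T$). *)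

(* Defs.v *)
From HB Require Import structures.
From mathcomp Require Import all_boot all_order all_algebra.
From mathcomp Require Import reals.
Set Implicit Arguments. Unset Strict Implicit. Unset Printing Implicit Defensive.
Import Order.TTheory GRing.Theory Num.Theory.
Local Open Scope ring_scope.

Section MarketModel.
Variables (R : realType) (Omega : finType) (d : nat).
(* node t w = the atom of F_t containing w *)
Variable node : nat -> Omega -> {set Omega}.
Variable T : nat.
(* exchange rates pi t w j k = pi^{jk}_t(w) *)
Variable pi : nat -> Omega -> 'I_d -> 'I_d -> R.

Definition vset := 'rV[R]_d -> Prop.

Definition isNode (t : nat) (mu : {set Omega}) : Prop := exists w, mu = node t w.
Definition isSucc (t : nat) (mu nu : {set Omega}) : Prop :=
  isNode t.+1 nu /\ nu \subset mu.

Definition adapted {A : Type} (t : nat) (x : Omega -> A) : Prop :=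
  forall w w', w' \in node t w -> x w' = x w.

Definition unitv (j : 'I_d) : 'rV[R]_d := delta_mx 0 j.

Definition Kcone (t : nat) (w : Omega) : vset := fun v =>
  exists (a : 'I_d -> R) (b : 'I_d -> 'I_d -> R),
    (forall j, 0 <= a j) /\ (forall j k, 0 <= b j k) /\
    v = \sum_j a j *: unitv j
        + \sum_j \sum_k b j k *: (pi t w j k *: unitv j - unitv k).

Definition inK (t : nat) (x : Omega -> 'rV[R]_d) : Prop :=
  adapted t x /\ forall w, Kcone t w (x w).

Definition inQ (t : nat) (z : Omega -> 'rV[R]_d) : Prop :=
  adapted t z /\
  exists y : nat -> Omega -> 'rV[R]_d,
    (forall s, (t < s <= T.+1)%N -> adapted s.-1 (y s)) /\
    (forall w, y T.+1 w = 0) /\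
    inK t (fun w => z w - y t.+1 w) /\
    (forall s, (t < s <= T)%N -> inK s (fun w => y s w - y s.+1 w)).

Definition Qnode (t : nat) (mu : {set Omega}) : vset := fun v =>
  exists z, inQ t z /\ exists w, w \in mu /\ z w = v.

Definition convex_set (C : vset) : Prop :=
  forall x y (l : R), C x -> C y -> 0 <= l -> l <= 1 -> C (l *: x + (1 - l) *: y).

Definition conv_hull (A : vset) : vset := fun x =>
  forall C : vset, convex_set C -> (forall y, A y -> C y) -> C x.

Definition dotv (x y : 'rV[R]_d) : R := \sum_j x 0 j * y 0 j.

Definition polyhedral (A : vset) : Prop :=
  exists (n : nat) (a : 'I_n -> 'rV[R]_d) (b : 'I_n -> R),
    forall x, A x <-> (forall i, dotv x (a i) <= b i).

Definition recession_cone (A : vset) : vset := fun y =>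
  forall l : R, 0 <= l -> forall x, A x -> A (x + l *: y).

Variable xi : nat -> Omega -> 'rV[R]_d.

Definition Ubd (t : nat) (mu : {set Omega}) : vset := fun x =>
  exists w q, w \in mu /\ Qnode t mu q /\ x = - xi t w + q.

Fixpoint Zrec (n : nat) (mu : {set Omega}) : vset :=
  match n with
  | 0 => Ubd T mu
  | n'.+1 =>
      let t := (T - n)%N in
      let W : vset := fun x => forall nu, isSucc t mu nu -> Zrec n' nu x in
      let V : vset := fun x => exists w q, W w /\ Qnode t mu q /\ x = w + q in
      conv_hull (fun x => Ubd t mu x \/ V x)
  end.

Definition Zbd (t : nat) (mu : {set Omega}) : vset := Zrec (T - t) mu.

End MarketModel.

(* Main.v *)
Require Import Defs.
From HB Require Import structures.
From mathcomp Require Import all_boot all_order all_algebra.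
From mathcomp Require Import reals.
From mathcomp Require Import ring lra zify.
From Stdlib Require Import Classical IndefiniteDescription.
Import Order.TTheory GRing.Theory Num.Theory.
Local Open Scope ring_scope.
Set Implicit Arguments. Unset Strict Implicit. Unset Printing Implicit Defensive.

Section FM.
Variable R : realType.

Definition lf {V : finType} (a x : V -> R) : R := \sum_v a v * x v.

Lemma sum_delta (I : finType) (p : I) (f : I -> R) :
  \sum_i (i == p)%:R * f i = f p.
Proof.
rewrite (bigD1 p) //= eqxx mul1r big1 ?addr0 // => i /negbTE ->.
by rewrite mul0r.
Qed.

Lemma exists_max (I : finType) (P : pred I) (f : I -> R) :
  (exists i, P i) -> exists i, P i /\ forall j, P j -> f j <= f i.
Proof.
move=> [i0 Pi0].
case: (arg_maxP f Pi0) => i Pi Hi.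
by exists i; split => // j /Hi.
Qed.

Lemma FM1 (I : finType) (c : I -> R) :
  exists (K : finType) (G : K -> I -> R),
    (forall k i, 0 <= G k i) /\ (forall k, \sum_i G k i * c i = 0) /\
    forall r : I -> R, (forall k, 0 <= \sum_i G k i * r i) ->
      exists y : R, forall i, c i * y <= r i.
Proof.
pose G (k : (I + I * I)%type) (i : I) : R :=
  match k with
  | inl i0 => if c i0 == 0 then (i == i0)%:R else 0
  | inr (p, n) => if (0 < c p) && (c n < 0)
                  then (i == p)%:R * (- c n) + (i == n)%:R * c p else 0
  end.
have sG : forall k (f : I -> R), \sum_i G k i * f i =
  match k with
  | inl i0 => if c i0 == 0 then f i0 else 0
  | inr (p, n) => if (0 < c p) && (c n < 0) then - c n * f p + c p * f n else 0
  end.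
  move=> [i0|[p n]] f /=.
    case: ifP => Hc; first exact: sum_delta.
    by rewrite big1 // => i _; rewrite mul0r.
  case: ifP => Hc; last by rewrite big1 // => i _; rewrite mul0r.
  rewrite (eq_bigr (fun i => (i == p)%:R * (- c n * f p) + (i == n)%:R * (c p * f n))).
    by rewrite big_split /= !sum_delta.
  move=> i _; rewrite mulrDl -!mulrA.
  by congr (_ + _); case: eqP => [->|_]; rewrite ?mul0r ?mul1r.
exists (I + I * I)%type, G; split; [|split].
- move=> [i0|[p n]] i /=.
    by case: ifP => _ //; rewrite ler0n.
  case: ifP => // /andP[cp cn].
  apply: addr_ge0; apply: mulr_ge0; rewrite ?ler0n //.
    by rewrite oppr_ge0 ltW.
  exact: ltW.
- move=> k; rewrite sG; case: k => [i0|[p n]].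
    by case: ifP => // /eqP.
  by case: ifP => //; rewrite mulNr mulrC addrC subrr.
move=> r Hr.
have H0 : forall i, c i = 0 -> 0 <= r i.
  move=> i ci; have := Hr (inl i); rewrite sG ci eqxx //.
have Hpn : forall p n, 0 < c p -> c n < 0 -> 0 <= - c n * r p + c p * r n.
  move=> p n cp cn; have := Hr (inr (p, n)); rewrite sG cp cn //.
case: (boolP [exists n, c n < 0]) => [/existsP [n0 cn0]|].
  have [n [cn Hn]] := exists_max (fun j => r j / c j) (ex_intro (fun n => c n < 0) n0 cn0).
  exists (r n / c n) => i.
  have cnz : c n != 0 by rewrite ltr0_neq0.
  have ey : r n / c n * c n = r n by rewrite divfK.
  move: (r n / c n) ey Hn => y ey Hn.
  case: (ltrgtP (c i) 0) => ci.
  - have := Hn i ci; rewrite /= => le.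
    have ci0 : c i != 0 by rewrite ltr0_neq0.
    have ei : r i / c i * c i = r i by rewrite divfK.
    move: (r i / c i) ei le => z ei le.
    by rewrite -ei [c i * _]mulrC; exact: (ler_wnM2r (ltW ci) le).
  - have := Hpn i n ci cn. rewrite -ey. nra.
  - by rewrite ci mul0r; apply: H0.
move=> /existsPn Hneg.
exists (- \sum_i `|r i / c i|) => i.
case: (ltrgtP (c i) 0) => ci.
- by have := Hneg i; rewrite ci.
- have ci0 : c i != 0 by rewrite gt_eqF.
  have hS : `|r i / c i| <= \sum_j `|r j / c j|.
    rewrite (bigD1 i) //= lerDl; apply: sumr_ge0 => j _; exact: normr_ge0.
  have ha : `|r i / c i| * c i = `|r i|.
    by rewrite normrM normfV (gtr0_norm ci) divfK.
  have hr : - `|r i| <= r i by rewrite lerNl -normrN ler_norm.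
  move: (\sum_j `|r j / c j|) (`|r i / c i|) hS ha hr => S a hS ha hr.
  nra.
- by rewrite ci mul0r; apply: H0.
Qed.

Lemma lf_sum (I V : finType) (G : I -> R) (a : I -> V -> R) (x : V -> R) :
  \sum_i G i * lf (a i) x = lf (fun v => \sum_i G i * a i v) x.
Proof.
rewrite /lf; under eq_bigr do rewrite mulr_sumr.
rewrite exchange_big; apply: eq_bigr => v _; rewrite mulr_suml.
by apply: eq_bigr => i _; rewrite mulrA.
Qed.

Lemma FMn n (I : finType) (B : I -> 'I_n -> R) :
  exists (K : finType) (G : K -> I -> R),
    (forall k i, 0 <= G k i) /\ (forall k j, \sum_i G k i * B i j = 0) /\
    forall r : I -> R, (forall k, 0 <= \sum_i G k i * r i) ->
      exists y, forall i, lf (B i) y <= r i.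
Proof.
elim: n I B => [|n IH] I B.
  exists I, (fun k i => (i == k)%:R); split; [|split].
  - by move=> k i; rewrite ler0n.
  - by move=> k [].
  move=> r Hr; exists (fun _ => 0) => i.
  by have := Hr i; rewrite sum_delta /lf big_ord0.
pose c i := B i ord0.
pose B' i j := B i (lift ord0 j).
have [K1 [G1 [G1p [G1c G1s]]]] := FM1 c.
pose B'' k1 j := \sum_i G1 k1 i * B' i j.
have [K2 [G2 [G2p [G2c G2s]]]] := IH K1 B''.
exists K2, (fun k2 i => \sum_k1 G2 k2 k1 * G1 k1 i); split; [|split].
- move=> k i; apply: sumr_ge0 => k1 _; exact: mulr_ge0.
- move=> k j.
  have -> : \sum_i (\sum_k1 G2 k k1 * G1 k1 i) * B i j =
            \sum_k1 G2 k k1 * (\sum_i G1 k1 i * B i j).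
    under eq_bigr do rewrite mulr_suml.
    rewrite exchange_big; apply: eq_bigr => k1 _; rewrite mulr_sumr.
    by apply: eq_bigr => i _; rewrite mulrA.
  case: (unliftP ord0 j) => [j'|] ->.
    exact: G2c.
  by rewrite big1 // => k1 _; rewrite G1c mulr0.
move=> r Hr.
pose r'' k1 := \sum_i G1 k1 i * r i.
have [y' Hy'] : exists y', forall k1, lf (B'' k1) y' <= r'' k1.
  apply: G2s => k2; have := Hr k2.
  congr (0 <= _); rewrite /r''; under [RHS]eq_bigr do rewrite mulr_sumr.
  rewrite exchange_big /=; apply: eq_bigr => i _; rewrite mulr_suml.
  by apply: eq_bigr => k1 _; rewrite mulrA.
pose r1 i := r i - lf (B' i) y'.
have [y0 Hy0] : exists y0, forall i, c i * y0 <= r1 i.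
  apply: G1s => k1; rewrite /r1.
  under eq_bigr do rewrite mulrBr.
  rewrite sumrB subr_ge0 lf_sum; exact: Hy'.
exists (fun j => if unlift ord0 j is Some j' then y' j' else y0) => i.
rewrite /lf big_ord_recl unlift_none.
under eq_bigr do rewrite liftK.
have := Hy0 i; rewrite /r1 /c /lf lerBrDr; congr (_ <= _).
Qed.

Lemma FMY (Y I : finType) (B : I -> Y -> R) :
  exists (K : finType) (G : K -> I -> R),
    (forall k i, 0 <= G k i) /\ (forall k j, \sum_i G k i * B i j = 0) /\
    forall r : I -> R, (forall k, 0 <= \sum_i G k i * r i) ->
      exists y, forall i, lf (B i) y <= r i.
Proof.
have [K [G [Gp [Gc Gs]]]] := FMn (fun i (k : 'I_#|Y|) => B i (enum_val k)).
exists K, G; split; [|split] => //.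
  by move=> k j; have := Gc k (enum_rank j); rewrite enum_rankK.
move=> r /Gs [y' Hy']; exists (fun v => y' (enum_rank v)) => i.
have := Hy' i; congr (_ <= _).
rewrite /lf (reindex (@enum_val Y predT)) /=; last first.
  by apply: onW_bij; exact: enum_val_bij.
by apply: eq_bigr => k _; rewrite enum_valK.
Qed.

Lemma proj_lemma (X Y I : finType) (Ax : I -> X -> R) (By : I -> Y -> R) :
  exists (K : finType) (A' : K -> X -> R) (L : K -> I -> R),
    forall (b : I -> R) (x : X -> R),
      (exists y, forall i, lf (Ax i) x + lf (By i) y <= b i) <->
      (forall k, lf (A' k) x <= \sum_i L k i * b i).
Proof.
have [K [G [Gp [Gc Gs]]]] := FMY By.
exists K, (fun k v => \sum_i G k i * Ax i v), G => b x; split.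
  move=> [y Hy] k; rewrite -lf_sum.
  have e0 : \sum_i G k i * lf (By i) y = 0.
    by rewrite lf_sum /lf big1 // => v _; rewrite Gc mul0r.
  have H2 := ler_sum _ (fun i (_ : true) => ler_wpM2l (Gp k i) (Hy i)).
  apply: le_trans; last exact: H2.
  under [X in _ <= X]eq_bigr do rewrite mulrDr.
  by rewrite big_split /= e0 addr0.
move=> H.
have [y Hy] : exists y, forall i, lf (By i) y <= b i - lf (Ax i) x.
  apply: Gs => k; under eq_bigr do rewrite mulrBr.
  by rewrite sumrB subr_ge0 lf_sum; apply: H.
by exists y => i; rewrite addrC -lerBrDr.
Qed.
End FM.

Set Implicit Arguments. Unset Strict Implicit. Unset Printing Implicit Defensive.

Section HP.
Variables (R : realType) (d : nat).

Definition cv (x : 'rV[R]_d) : 'I_d -> R := fun j => x 0 j.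

Definition HPv (S C : 'rV[R]_d -> Prop) : Prop :=
  exists (I : finType) (A : I -> 'I_d -> R) (b : I -> R),
    (forall x, S x <-> forall i, lf (A i) (cv x) <= b i) /\
    (forall x, C x <-> forall i, lf (A i) (cv x) <= 0).

Lemma lf_ext (V : finType) (a x y : V -> R) : (forall v, x v = y v) -> lf a x = lf a y.
Proof. by move=> e; apply: eq_bigr => v _; rewrite e. Qed.

Lemma lf_exta (V : finType) (a a' x : V -> R) : (forall v, a v = a' v) -> lf a x = lf a' x.
Proof. by move=> e; apply: eq_bigr => v _; rewrite e. Qed.

Lemma lfD (V : finType) (a x y : V -> R) : lf a (fun v => x v + y v) = lf a x + lf a y.
Proof. by rewrite /lf -big_split; apply: eq_bigr => v _; rewrite mulrDr. Qed.

Lemma lfZ (V : finType) (a x : V -> R) l : lf a (fun v => l * x v) = l * lf a x.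
Proof. by rewrite /lf mulr_sumr; apply: eq_bigr => v _; rewrite mulrCA. Qed.

Lemma lfNa (V : finType) (a x : V -> R) : lf (fun v => - a v) x = - lf a x.
Proof. by rewrite /lf -sumrN; apply: eq_bigr => v _; rewrite mulNr. Qed.

Lemma lf0a (V : finType) (x : V -> R) : lf (fun _ => 0) x = 0.
Proof. by rewrite /lf big1 // => v _; rewrite mul0r. Qed.

Lemma lf0 (V : finType) (a : V -> R) : lf a (fun _ => 0) = 0.
Proof. by rewrite /lf big1 // => v _; rewrite mulr0. Qed.

Lemma cvD a (x y : 'rV[R]_d) : lf a (cv (x + y)) = lf a (cv x) + lf a (cv y).
Proof. by rewrite -lfD; apply: lf_ext => j; rewrite /cv mxE. Qed.

Lemma cvZ a l (x : 'rV[R]_d) : lf a (cv (l *: x)) = l * lf a (cv x).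
Proof. by rewrite -lfZ; apply: lf_ext => j; rewrite /cv mxE. Qed.

Lemma cvN a (x : 'rV[R]_d) : lf a (cv (- x)) = - lf a (cv x).
Proof.
by rewrite -scaleN1r cvZ mulN1r.
Qed.

Lemma cvB a (x y : 'rV[R]_d) : lf a (cv (x - y)) = lf a (cv x) - lf a (cv y).
Proof. by rewrite cvD cvN. Qed.

Lemma cv0 a : lf a (cv (0 : 'rV[R]_d)) = 0.
Proof. by rewrite -(lf0 a); apply: lf_ext => j; rewrite /cv mxE. Qed.

Lemma cvrow a (f : 'I_d -> R) : lf a (cv (\row_j f j)) = lf a f.
Proof. by apply: lf_ext => j; rewrite /cv mxE. Qed.

Lemma HPv_ext S C S' C' : HPv S C -> (forall x, S x <-> S' x) ->
  (forall x, C x <-> C' x) -> HPv S' C'.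
Proof.
move=> [I [A [b [HS HC]]]] eS eC; exists I, A, b; split => x.
  by rewrite -eS.
by rewrite -eC.
Qed.

Lemma HPv_rec S C x0 : HPv S C -> S x0 ->
  forall v, recession_cone S v <-> C v.
Proof.
move=> [I [A [b [HS HC]]]] Sx0 v; rewrite HC; split.
  move=> Hr i; case: (lerP (lf (A i) (cv v)) 0) => // pos.
  have := (HS x0).1 Sx0 i => le0.
  pose l := (b i - lf (A i) (cv x0) + 1) / lf (A i) (cv v).
  have l0 : 0 <= l by rewrite divr_ge0 ?ltW //; lra.
  have := (HS _).1 (Hr l l0 x0 Sx0) i.
  rewrite cvD cvZ /l divfK ?gt_eqF //.
  move=> h; exfalso; move: h; apply/negP; rewrite -ltNge; lra.
move=> Hv l l0 x Sx; apply/HS => i.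
rewrite cvD cvZ.
have := (HS x).1 Sx i; have := Hv i => h1 h2.
have : l * lf (A i) (cv v) <= 0 by rewrite mulr_ge0_le0.
lra.
Qed.

Lemma HPv_poly S C : HPv S C -> polyhedral S.
Proof.
move=> [I [A [b [HS HC]]]].
exists #|I|, (fun k : 'I_#|I| => \row_j A (enum_val k) j), (fun k : 'I_#|I| => b (enum_val k)) => x.
have e : forall k : 'I_#|I|, dotv x (\row_j A (enum_val k) j) = lf (A (enum_val k)) (cv x).
  by move=> k; rewrite /dotv /lf /cv; apply: eq_bigr => j _; rewrite mxE mulrC.
rewrite HS; split.
  by move=> H k; rewrite e.
by move=> H i; have := H (enum_rank i); rewrite e enum_rankK.
Qed.

Lemma HPv_inter S1 C1 S2 C2 : HPv S1 C1 -> HPv S2 C2 ->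
  HPv (fun x => S1 x /\ S2 x) (fun x => C1 x /\ C2 x).
Proof.
move=> [I1 [A1 [b1 [HS1 HC1]]]] [I2 [A2 [b2 [HS2 HC2]]]].
exists (I1 + I2)%type, (fun i => match i with inl i => A1 i | inr i => A2 i end),
  (fun i => match i with inl i => b1 i | inr i => b2 i end).
split => x; rewrite ?HS1 ?HS2 ?HC1 ?HC2; split.
- by move=> [H1 H2] [i|i].
- by move=> H; split => i; [exact: (H (inl i)) | exact: (H (inr i))].
- by move=> [H1 H2] [i|i].
- by move=> H; split => i; [exact: (H (inl i)) | exact: (H (inr i))].
Qed.

Lemma HPv_top : HPv (fun _ => True) (fun _ => True).
Proof.
exists void, (fun (i : void) _ => 0), (fun (i : void) => 0).
by split => x; split => // _ [].
Qed.

Lemma HPv_bigcap (F : finType) (P : F -> Prop) (S C : F -> 'rV[R]_d -> Prop) :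
  (forall f, P f -> HPv (S f) (C f)) ->
  HPv (fun x => forall f, P f -> S f x) (fun x => forall f, P f -> C f x).
Proof.
move=> H.
suff : forall s : seq F, HPv (fun x => forall f, f \in s -> P f -> S f x)
                              (fun x => forall f, f \in s -> P f -> C f x).
  move=> /(_ (enum F)) h; apply: (HPv_ext h) => x.
    by split => h' f; [apply: h'; rewrite mem_enum | move=> _; apply: h'].
  by split => h' f; [apply: h'; rewrite mem_enum | move=> _; apply: h'].
elim => [|f s IH].
  by apply: (HPv_ext HPv_top) => x; split.
have Hf : HPv (fun x => P f -> S f x) (fun x => P f -> C f x).
  case: (classic (P f)) => Pf.
    by apply: (HPv_ext (H f Pf)) => x; split => [h _|h]; try exact: h; exact: h Pf.
  by apply: (HPv_ext HPv_top) => x; split.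
apply: (HPv_ext (HPv_inter Hf IH)) => x; split.
- move=> [h1 h2] g; rewrite in_cons => /orP [/eqP -> //|]; exact: h2.
- by move=> h; split; [apply: h; rewrite in_cons eqxx | move=> g gs; apply: h; rewrite in_cons gs orbT].
- move=> [h1 h2] g; rewrite in_cons => /orP [/eqP -> //|]; exact: h2.
- by move=> h; split; [apply: h; rewrite in_cons eqxx | move=> g gs; apply: h; rewrite in_cons gs orbT].
Qed.

Lemma HPv_proj (Y I : finType) (Ax : I -> 'I_d -> R) (By : I -> Y -> R) (bb bb0 : I -> R) S C :
  (forall x, S x <-> exists y, forall i, lf (Ax i) (cv x) + lf (By i) y <= bb i) ->
  (forall x, C x <-> exists y, forall i, lf (Ax i) (cv x) + lf (By i) y <= bb0 i) ->
  (forall i, bb0 i = 0) ->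
  HPv S C.
Proof.
move=> eS eC' e0.
have eC : forall x, C x <-> exists y, forall i, lf (Ax i) (cv x) + lf (By i) y <= 0.
  by move=> x; rewrite eC'; split => -[y h]; exists y => i; have := h i; rewrite e0.
have [K [A' [L HL]]] := proj_lemma Ax By.
exists K, A', (fun k => \sum_i L k i * bb i); split => x.
  by rewrite eS HL.
rewrite eC (HL (fun _ => 0)); split => h k; have := h k;
  by rewrite big1 // => i _; rewrite mulr0.
Qed.


Lemma HPv_sum S1 C1 S2 C2 : HPv S1 C1 -> HPv S2 C2 ->
  HPv (fun x => exists a c, S1 a /\ S2 c /\ x = a + c)
      (fun x => exists a c, C1 a /\ C2 c /\ x = a + c).
Proof.
move=> [I1 [A1 [b1 [HS1 HC1]]]] [I2 [A2 [b2 [HS2 HC2]]]].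
pose Ax (i : (I1 + I2)%type) : 'I_d -> R :=
  match i with inl _ => (fun _ => 0) | inr i => A2 i end.
pose By (i : (I1 + I2)%type) : 'I_d -> R :=
  match i with inl i => A1 i | inr i => (fun j => - A2 i j) end.
pose bb (b1' : I1 -> R) (b2' : I2 -> R) (i : (I1 + I2)%type) : R :=
  match i with inl i => b1' i | inr i => b2' i end.
have key : forall b1' b2' x,
  (exists a c, (forall i, lf (A1 i) (cv a) <= b1' i) /\
     (forall i, lf (A2 i) (cv c) <= b2' i) /\ x = a + c) <->
  exists y, forall i, lf (Ax i) (cv x) + lf (By i) y <= bb b1' b2' i.
  move=> b1' b2' x; split.
    move=> [a [c [h1 [h2 ->]]]]; exists (cv a) => -[i|i] /=.
      by rewrite lf0a add0r; apply: h1.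
    by rewrite lfNa cvD; have := h2 i; lra.
  move=> [y h]; exists (\row_j y j), (x - \row_j y j); split; [|split].
  - by move=> i; have := h (inl i); rewrite /= lf0a add0r cvrow.
  - by move=> i; have := h (inr i); rewrite /= lfNa cvB cvrow.
  - by rewrite addrC subrK.
apply: (@HPv_proj _ _ Ax By (bb b1 b2) (bb (fun _ => 0) (fun _ => 0))).
- move=> x; rewrite -key; split.
    by move=> [a [c [h1 [h2 e]]]]; exists a, c; rewrite -HS1 -HS2.
  by move=> [a [c [h1 [h2 e]]]]; exists a, c; rewrite HS1 HS2.
- move=> x; rewrite -key; split.
    by move=> [a [c [h1 [h2 e]]]]; exists a, c; rewrite -HC1 -HC2.
  by move=> [a [c [h1 [h2 e]]]]; exists a, c; rewrite HC1 HC2.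
- by case.
Qed.

Lemma HPv_trans S C v : HPv S C -> HPv (fun x => exists q, S q /\ x = v + q) C.
Proof.
move=> [I [A [b [HS HC]]]].
exists I, A, (fun i => b i + lf (A i) (cv v)); split => // x; split.
  by move=> [q [Sq ->]] i; rewrite cvD; have := (HS q).1 Sq i; lra.
move=> h; exists (x - v); split; last by rewrite addrC subrK.
by apply/HS => i; rewrite cvB; have := h i; lra.
Qed.

Lemma HPv_convex S C : HPv S C -> convex_set S.
Proof.
move=> [I [A [b [HS HC]]]] x y l Sx Sy l0 l1; apply/HS => i.
rewrite cvD !cvZ; have := (HS x).1 Sx i; have := (HS y).1 Sy i => h1 h2.
nra.
Qed.

Lemma hull_sub (A : 'rV[R]_d -> Prop) x : A x -> conv_hull A x.
Proof. by move=> Ax C _ h; apply: h. Qed.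

Lemma hull_convex (A : 'rV[R]_d -> Prop) : convex_set (conv_hull A).
Proof.
move=> x y l hx hy l0 l1 C cC sC.
exact: (cC _ _ _ (hx C cC sC) (hy C cC sC) l0 l1).
Qed.

Definition mk (f : 'I_d -> R) (c : R) : 'I_d.+1 -> R :=
  fun j => if unlift ord0 j is Some j' then f j' else c.

Lemma lf_mk f c (y : 'I_d.+1 -> R) :
  lf (mk f c) y = c * y ord0 + lf f (fun j => y (lift ord0 j)).
Proof.
rewrite /lf big_ord_recl /mk unlift_none; congr (_ + _).
by apply: eq_bigr => j _; rewrite liftK.
Qed.


Lemma HPv_conv S1 C1 S2 C2 : HPv S1 C1 -> HPv S2 C2 -> (forall x, C1 x <-> C2 x) ->
  HPv (conv_hull (fun x => S1 x \/ S2 x)) C1.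
Proof.
move=> H1 H2 eC.
case: (H1) => [I1 [A1 [b1 [HS1 HC1]]]].
case: (H2) => [I2 [A2 [b2 [HS2 HC2]]]].
pose I := ((I1 + I2) + bool)%type.
pose Ax (i : I) : 'I_d -> R :=
  match i with inl (inr i) => A2 i | _ => (fun _ => 0) end.
pose By (i : I) : 'I_d.+1 -> R :=
  match i with
  | inl (inl i) => mk (A1 i) (- b1 i)
  | inl (inr i) => mk (fun j => - A2 i j) (b2 i)
  | inr false => mk (fun _ => 0) (-1)
  | inr true => mk (fun _ => 0) 1 end.
pose bb (e : R) (i : I) : R :=
  match i with
  | inl (inl _) => 0 | inl (inr i) => e * b2 i | inr false => 0 | inr true => e end.
have key : forall e x,
  (exists y, forall i, lf (Ax i) (cv x) + lf (By i) y <= bb e i) <->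
  exists l a, (0 <= l /\ l <= e) /\ (forall i, lf (A1 i) (cv a) <= l * b1 i) /\
     (forall i, lf (A2 i) (cv (x - a)) <= (e - l) * b2 i).
  move=> e x; split.
    move=> [y h]; exists (y ord0), (\row_j y (lift ord0 j)); split; [split|split].
    - by have := h (inr false); rewrite /= lf0a add0r lf_mk lf0a; lra.
    - by have := h (inr true); rewrite /= lf0a add0r lf_mk lf0a; lra.
    - move=> i; have := h (inl (inl i)); rewrite /= lf0a add0r lf_mk cvrow; lra.
    - move=> i; have := h (inl (inr i)); rewrite /= lf_mk lfNa cvB cvrow; lra.
  move=> [l [a [[l0 le] [h1 h2]]]].
  exists (fun j => if unlift ord0 j is Some j' then a 0 j' else l).
  have ey : forall f c, lf (mk f c) (fun j => if unlift ord0 j is Some j' then a 0 j' else l)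
     = c * l + lf f (cv a).
    move=> f c; rewrite lf_mk unlift_none; congr (_ + _).
    by apply: lf_ext => j; rewrite liftK.
  case=> [[i|i]|[]] /=; rewrite ey ?lf0a.
  - by have := h1 i; lra.
  - by rewrite lfNa; have := h2 i; rewrite cvB; lra.
  - by lra.
  - by lra.
have HS : HPv (fun x => exists y, forall i, lf (Ax i) (cv x) + lf (By i) y <= bb 1 i) C1.
  apply: (@HPv_proj _ _ Ax By (bb 1) (bb 0)) => //.
    move=> x; rewrite key; split.
      move=> Cx; exists 0, x; split; [split=> //|split].
        by move=> i; rewrite mul0r; exact: (HC1 x).1 Cx i.
      by move=> i; rewrite subrr cv0 subrr mul0r.
    move=> [l [a [[l0 le] [ha hb]]]].
    have l00 : l = 0 by apply/le_anti/andP.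
    move: ha hb; rewrite l00 subrr => ha hb.
    have Ca : C1 a by apply/(HC1 _) => i; rewrite -(mul0r (b1 i)); apply: ha.
    have Cxa : C1 (x - a) by apply/(eC _)/HC2 => i; rewrite -(mul0r (b2 i)); apply: hb.
    apply/(HC1 _) => i; have := (HC1 a).1 Ca i; have := (HC1 _).1 Cxa i.
    rewrite cvB; lra.
  by case=> [[i|i]|[]] //=; rewrite mul0r.
apply: (HPv_ext HS) => // x; split; last first.
  move=> hx; apply: (hx (fun x => exists y, forall i, lf (Ax i) (cv x) + lf (By i) y <= bb 1 i)); first exact: HPv_convex HS.
  move=> y [S1y|S2y]; apply/key.
    exists 1, y; split; [split=> //; lra|split].
      by move=> i; rewrite mul1r; exact: (HS1 y).1 S1y i.
    by move=> i; rewrite subrr cv0 subrr mul0r.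
  exists 0, 0; split; [split=> //; lra|split].
    by move=> i; rewrite cv0 mul0r.
  by move=> i; rewrite subr0 subr0 mul1r; exact: (HS2 y).1 S2y i.
move/key => [l [a [[l0 l1] [ha hb]]]].
case: (eqVneq l 0) => [el|nl0].
  move: ha hb; rewrite el subr0 => ha hb.
  have Ca : C2 a by apply/(eC _)/HC1 => i; rewrite -(mul0r (b1 i)); apply: ha.
  apply: hull_sub; right; apply/(HS2 _) => i.
  have := (HC2 a).1 Ca i; have := hb i; rewrite cvB; lra.
case: (eqVneq l 1) => [el|nl1].
  move: ha hb; rewrite el subrr => ha hb.
  have Cxa : C1 (x - a) by apply/(eC _)/(HC2 _) => i; rewrite -(mul0r (b2 i)); apply: hb.
  apply: hull_sub; left; apply/(HS1 _) => i.
  have := (HC1 _).1 Cxa i; have := ha i; rewrite cvB; lra.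
have lp : 0 < l by rewrite lt_def nl0 l0.
have lq : 0 < 1 - l by rewrite subr_gt0 lt_def eq_sym nl1 l1.
have -> : x = l *: (l^-1 *: a) + (1 - l) *: ((1 - l)^-1 *: (x - a)).
  by rewrite !scalerA mulfV ?gt_eqF // mulfV ?gt_eqF // !scale1r addrC subrK.
apply: hull_convex; [| |exact: l0|exact: l1].
  apply: hull_sub; left; apply/(HS1 _) => i; rewrite cvZ.
  have := ha i => h; rewrite -(mulKf (lt0r_neq0 lp) (b1 i)).
  by apply: ler_wpM2l; [rewrite invr_ge0 ltW | ].
apply: hull_sub; right; apply/(HS2 _) => i; rewrite cvZ.
have := hb i => h; rewrite -(mulKf (lt0r_neq0 lq) (b2 i)).
by apply: ler_wpM2l; [rewrite invr_ge0 ltW | ].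
Qed.


Lemma HPv_gencone (Y : finType) (g : Y -> 'rV[R]_d) :
  HPv (fun v => exists c : Y -> R, (forall y, 0 <= c y) /\ v = \sum_y c y *: g y)
      (fun v => exists c : Y -> R, (forall y, 0 <= c y) /\ v = \sum_y c y *: g y).
Proof.
pose I := (Y + 'I_d * bool)%type.
pose Ax (i : I) : 'I_d -> R := match i with
  | inl _ => fun _ => 0
  | inr (l, true) => fun j => (j == l)%:R
  | inr (l, false) => fun j => - (j == l)%:R end.
pose By (i : I) : Y -> R := match i with
  | inl y0 => fun y => - (y == y0)%:R
  | inr (l, true) => fun y => - g y 0 l
  | inr (l, false) => fun y => g y 0 l end.
have ed : forall l (v : 'rV[R]_d), lf (fun j => (j == l)%:R) (cv v) = v 0 l.
  by move=> l v; rewrite /lf sum_delta.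
have es : forall (c : Y -> R) l, (\sum_y c y *: g y) 0 l = lf (fun y => g y 0 l) c.
  by move=> c l; rewrite summxE; apply: eq_bigr => y _; rewrite mxE mulrC.
have key : forall v, (exists c : Y -> R, (forall y, 0 <= c y) /\ v = \sum_y c y *: g y) <->
   exists c, forall i, lf (Ax i) (cv v) + lf (By i) c <= (fun _ => 0) i.
  move=> v; split.
    move=> [c [c0 ->]]; exists c => -[y0|[l []]] /=.
    - by rewrite lf0a add0r lfNa /lf sum_delta oppr_le0.
    - by rewrite ed es lfNa subrr.
    - by rewrite lfNa ed es addrC subrr.
  move=> [c h]; exists c; split.
    by move=> y; have := h (inl y); rewrite /= lf0a add0r lfNa /lf sum_delta oppr_le0.
  apply/rowP => l; rewrite es; apply/le_anti/andP; split.
    by have := h (inr (l, true)); rewrite /= ed lfNa subr_le0.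
  by have := h (inr (l, false)); rewrite /= lfNa ed addrC subr_le0.
by apply: (@HPv_proj _ _ Ax By (fun _ => 0) (fun _ => 0)).
Qed.

End HP.

Set Implicit Arguments. Unset Strict Implicit. Unset Printing Implicit Defensive.

Section Model.
Variables (R : realType) (Omega : finType) (d T : nat).
Variable node : nat -> Omega -> {set Omega}.
Variable pi : nat -> Omega -> 'I_d -> 'I_d -> R.
Variable xi : nat -> Omega -> 'rV[R]_d.
Hypothesis Hnode_in : forall t w, w \in node t w.
Hypothesis Hnode_part : forall t w w', w' \in node t w -> node t w' = node t w.
Hypothesis Hnode_refine : forall t w, (t < T)%N -> node t.+1 w \subset node t w.
Hypothesis Hpi_adapt : forall t j k, (t <= T)%N -> adapted node t (fun w => pi t w j k).
Hypothesis Hxi_adapt : forall t, (t <= T)%N -> adapted node t (xi t).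

Lemma node_mem t w w0 : (w \in node t w0) = (node t w == node t w0).
Proof.
apply/idP/eqP => [/Hnode_part //|<-]; exact: Hnode_in.
Qed.

Lemma adapted_mem t w0 : adapted node t (fun w => w \in node t w0).
Proof.
move=> w w' /Hnode_part e; by rewrite !node_mem e.
Qed.

Lemma node_sub t1 t2 w : (t1 <= t2)%N -> (t2 <= T)%N -> node t2 w \subset node t1 w.
Proof.
move=> le1; elim: t2 le1 => [|t2 IH] le1 le2.
  by have -> : t1 = 0%N by lia.
case: (ltnP t1 t2.+1) => h.
  apply: subset_trans (Hnode_refine _ _) (IH _ _); lia.
by have -> : t1 = t2.+1 by lia.
Qed.

Lemma adapted_mono {A : Type} t1 t2 (x : Omega -> A) : (t1 <= t2)%N -> (t2 <= T)%N ->
  adapted node t1 x -> adapted node t2 x.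
Proof.
move=> h1 h2 ax w w' ww; apply: ax; exact: (subsetP (node_sub w h1 h2)).
Qed.

Lemma adapted_cst {A : Type} t (a : A) : adapted node t (fun _ => a).
Proof. by []. Qed.

Lemma adapted_B t (f g : Omega -> 'rV[R]_d) : adapted node t f -> adapted node t g ->
  adapted node t (fun w => f w - g w).
Proof. by move=> af ag w w' ww; rewrite (af _ _ ww) (ag _ _ ww). Qed.

Lemma adapted_ite {A : Type} t (b : Omega -> bool) (f g : Omega -> A) :
  adapted node t b -> adapted node t f -> adapted node t g ->
  adapted node t (fun w => if b w then f w else g w).
Proof. by move=> ab af ag w w' ww; rewrite (ab _ _ ww) (af _ _ ww) (ag _ _ ww). Qed.

Lemma K0 t w : Kcone pi t w 0.
Proof.
exists (fun _ => 0), (fun _ _ => 0); split => //; split => //.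
by rewrite !big1 ?addr0 // => j _; rewrite ?big1 ?scale0r // => k _; rewrite scale0r.
Qed.

Lemma Kcone_adapt t w w0 v : (t <= T)%N -> w \in node t w0 ->
  Kcone pi t w v <-> Kcone pi t w0 v.
Proof.
move=> tT wm.
have e : forall j k, pi t w j k = pi t w0 j k.
  move=> j k; apply: (Hpi_adapt j k tT); rewrite -(Hnode_part wm); exact: Hnode_in.
rewrite /Kcone; split => -[a [b [ha [hb ->]]]]; exists a, b; do 2 split => //;
  by congr (_ + _); apply: eq_bigr => j _; apply: eq_bigr => k _; rewrite e.
Qed.


Lemma Qnode_zero t w0 : Qnode node T pi t (node t w0) 0.
Proof.
exists (fun _ => 0); split; last by exists w0.
split => //; exists (fun _ _ => 0); split => //; split => //; split.
  by split => // w; rewrite subr0; exact: K0.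
by move=> s _; split => // w; rewrite subr0; exact: K0.
Qed.

Lemma QT w0 v : Qnode node T pi T (node T w0) v <-> Kcone pi T w0 v.
Proof.
split.
  move=> [z [[za [y [ya [yT [[_ hK] _]]]]] [w [wm <-]]]].
  have := hK w; rewrite yT subr0 => h; exact: (proj1 (Kcone_adapt _ (leqnn T) wm) h).
move=> hk.
pose z w := if w \in node T w0 then v else 0.
exists z; split; last by exists w0; rewrite /z Hnode_in.
have az : adapted node T z.
  by rewrite /z; apply: adapted_ite; [exact: adapted_mem | exact: adapted_cst | exact: adapted_cst].
split => //.
exists (fun _ _ => 0); split => //; split => //; split; last by move=> s; lia.
split.
  by apply: adapted_B => //.
move=> w; rewrite subr0 /z; case: ifP => wm; last exact: K0.
exact: (proj2 (Kcone_adapt _ (leqnn T) wm) hk).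
Qed.


Lemma succ_node t w0 w : (t < T)%N -> w \in node t w0 ->
  isSucc node t (node t w0) (node t.+1 w).
Proof.
move=> tT wm; split; first by exists w.
by rewrite -(Hnode_part wm); exact: Hnode_refine.
Qed.

Lemma Qstep_l t w0 v : (t < T)%N -> Qnode node T pi t (node t w0) v ->
  exists k u, Kcone pi t w0 k /\
    (forall nu, isSucc node t (node t w0) nu -> Qnode node T pi t.+1 nu u) /\ v = k + u.
Proof.
move=> tT [z [[za [y [ya [yT [[_ hK] hs]]]]] [w1 [w1m <-]]]].
exists (z w1 - y t.+1 w1), (y t.+1 w1); split; [|split].
- exact: (proj1 (Kcone_adapt _ (ltnW tT) w1m) (hK w1)).
- move=> nu [[w2 ->] nsub].
  have ay : adapted node t (y t.+1) by apply: (ya t.+1); lia.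
  exists (y t.+1); split; last first.
    exists w2; split; first exact: Hnode_in.
    apply: ay; rewrite (Hnode_part w1m); exact: (subsetP nsub _ (Hnode_in _ _)).
  split; first by apply: (adapted_mono (t1 := t)) => //; lia.
  exists y; split; first by move=> s hs'; apply: ya; lia.
  split => //; split; first by apply: hs; lia.
  by move=> s hs'; apply: hs; lia.
- by rewrite subrK.
Qed.


Lemma Qstep_r t w0 k u : (t < T)%N -> Kcone pi t w0 k ->
  (forall nu, isSucc node t (node t w0) nu -> Qnode node T pi t.+1 nu u) ->
  Qnode node T pi t (node t w0) (k + u).
Proof.
move=> tT hk hu.
set mu := node t w0.
pose Pr nu (p : (Omega -> 'rV[R]_d) * (nat -> Omega -> 'rV[R]_d)) :=
  isSucc node t mu nu ->
  [/\ adapted node t.+1 p.1,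
     (forall s, (t.+1 < s <= T.+1)%N -> adapted node s.-1 (p.2 s)),
     (forall w, p.2 T.+1 w = 0),
     inK node pi t.+1 (fun w => p.1 w - p.2 t.+2 w) &
     ((forall s, (t.+1 < s <= T)%N -> inK node pi s (fun w => p.2 s w - p.2 s.+1 w)) /\
     (forall w, w \in nu -> p.1 w = u))].
have ex : forall nu, exists p, Pr nu p.
  move=> nu; case: (classic (isSucc node t mu nu)) => hs; last first.
    by exists (fun _ => 0, fun _ _ => 0).
  have [z [[za [y [h1 [h2 [h3 h4]]]]] [w [wn zw]]]] := hu nu hs.
  exists (z, y) => _ /=; split => //; split => //.
  move=> w' w'n; case: hs => [[w2 e] _]; move: wn w'n; rewrite e => wn w'n.
  by rewrite -zw (za _ _ w'n) (za _ _ wn).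
pose F nu := proj1_sig (constructive_indefinite_description _ (ex nu)).
have HF : forall nu, Pr nu (F nu).
  by move=> nu; exact: (proj2_sig (constructive_indefinite_description _ (ex nu))).
pose Z w := if w \in mu then k + u else 0.
pose Y s w := if s == t.+1 then (if w \in mu then u else 0)
              else (if w \in mu then (F (node t.+1 w)).2 s w else 0).
have succw : forall w, w \in mu -> isSucc node t mu (node t.+1 w).
  by move=> w wm; apply: succ_node.
have amu : adapted node t (fun w => w \in mu) by exact: adapted_mem.
have Ya : forall s, (t < s <= T.+1)%N -> adapted node s.-1 (Y s).
  move=> s hs; case: (eqVneq s t.+1) => [->|sn].
    rewrite /Y eqxx /=; apply: adapted_ite => //.
  move=> w w' ww; rewrite /Y (negbTE sn).
  have w't : w' \in node t w by apply: (subsetP (node_sub w (t1 := t) (t2 := s.-1) _ _)) => //; lia.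
  have w't1 : w' \in node t.+1 w by apply: (subsetP (node_sub w (t1 := t.+1) (t2 := s.-1) _ _)) => //; lia.
  rewrite (amu _ _ w't) (Hnode_part w't1).
  case: ifP => // wm.
  have [_ a2 _ _ _] := HF _ (succw w wm).
  by apply: a2 => //; lia.
have aZ : adapted node t Z by rewrite /Z; apply: adapted_ite.
exists Z; split; last by exists w0; rewrite /Z Hnode_in.
split => //; exists Y; split => //; split.
  move=> w; rewrite /Y; case: eqP => [e|_]; first lia.
  case: ifP => // wm; by have [_ _ a3 _ _] := HF _ (succw w wm).
split.
  split; first by apply: adapted_B => //; apply: (Ya t.+1); lia.
  move=> w; rewrite /Z /Y eqxx; case: ifP => wm.
    by rewrite addrK; exact: (proj2 (Kcone_adapt _ (ltnW tT) wm) hk).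
  by rewrite subrr; exact: K0.
move=> s hs; split.
  apply: adapted_B; last by apply: (Ya s.+1); lia.
  by apply: (adapted_mono (t1 := s.-1)); [lia|lia|apply: Ya; lia].
have hneq : (s.+1 == t.+1) = false by apply/negbTE; lia.
move=> w; rewrite /Y hneq.
case: (boolP (w \in mu)) => wm; last first.
  by case: (s == t.+1); rewrite /= subrr; exact: K0.
have [_ _ _ [_ a4] [a5 a6]] := HF _ (succw w wm).
case: (eqVneq s t.+1) => [e|ne].
  subst s; rewrite ?eqxx /= -(a6 w (Hnode_in _ _)); exact: a4.
by have [_ ] := a5 s ltac:(lia).
Qed.


Definition gK t w (y : ('I_d + 'I_d * 'I_d)%type) : 'rV[R]_d :=
  match y with
  | inl j => unitv R j
  | inr (j, k) => pi t w j k *: unitv R j - unitv R k end.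

Lemma gK_sum t w (c : ('I_d + 'I_d * 'I_d)%type -> R) :
  \sum_y c y *: gK t w y = \sum_j c (inl j) *: unitv R j +
     \sum_j \sum_k c (inr (j, k)) *: (pi t w j k *: unitv R j - unitv R k).
Proof.
rewrite big_sumType /=; congr (_ + _).
by rewrite pair_big /=; apply: eq_bigr => -[j k] _.
Qed.

Lemma Kcone_gen t w v : Kcone pi t w v <->
  exists c, (forall y, 0 <= c y) /\ v = \sum_y c y *: gK t w y.
Proof.
split.
  move=> [a [b [ha [hb ->]]]].
  exists (fun y => match y with inl j => a j | inr (j, k) => b j k end); split.
    by case=> [j|[j k]].
  by rewrite gK_sum.
move=> [c [hc ->]]; exists (fun j => c (inl j)), (fun j k => c (inr (j, k))).
by split => //; split => //; rewrite gK_sum.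
Qed.

Lemma HPv_K t w : HPv (Kcone pi t w) (Kcone pi t w).
Proof.
apply: (HPv_ext (HPv_gencone (gK t w))) => v; split;
  by move/Kcone_gen.
Qed.


Lemma Qstep t w0 v : (t < T)%N -> Qnode node T pi t (node t w0) v <->
  exists a c, Kcone pi t w0 a /\
    (forall nu, isSucc node t (node t w0) nu -> Qnode node T pi t.+1 nu c) /\ v = a + c.
Proof.
move=> tT; split; first exact: Qstep_l.
by move=> [a [c [ha [hc ->]]]]; apply: Qstep_r.
Qed.

Lemma HPv_Q n : forall t w0, (t + n = T)%N ->
  HPv (Qnode node T pi t (node t w0)) (Qnode node T pi t (node t w0)).
Proof.
elim: n => [|n IH] t w0 e.
  rewrite addn0 in e; subst t.
  by apply: (HPv_ext (HPv_K T w0)) => v; rewrite QT.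
have tT : (t < T)%N by lia.
have Hc : HPv (fun x => forall nu, isSucc node t (node t w0) nu -> Qnode node T pi t.+1 nu x)
              (fun x => forall nu, isSucc node t (node t w0) nu -> Qnode node T pi t.+1 nu x).
  apply: (HPv_bigcap (F := {set Omega})) => nu [[w2 ->] _].
  apply: IH; lia.
by apply: (HPv_ext (HPv_sum (HPv_K t w0) Hc)) => v; rewrite Qstep.
Qed.

Lemma HPv_cone_add (C : 'rV[R]_d -> Prop) a b : HPv C C -> C a -> C b -> C (a + b).
Proof.
move=> [I [A [bb [_ HC]]]] Ca Cb; apply/(HC _) => i; rewrite cvD.
have := (HC a).1 Ca i; have := (HC b).1 Cb i; lra.
Qed.


Lemma HPv_U t w0 : (t <= T)%N ->
  HPv (Ubd node T pi xi t (node t w0)) (Qnode node T pi t (node t w0)).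
Proof.
move=> tT.
have HQ : HPv (Qnode node T pi t (node t w0)) (Qnode node T pi t (node t w0)).
  apply: (HPv_Q (n := (T - t)%N)); lia.
apply: (HPv_ext (HPv_trans (- xi t w0) HQ)) => // x; split.
  move=> [q [Qq ->]]; exists w0, q; split => //; exact: Hnode_in.
move=> [w [q [wm [Qq ->]]]]; exists q; split => //.
by rewrite (Hxi_adapt tT wm).
Qed.

Lemma HPv_Z n : forall w0, (n <= T)%N ->
  HPv (Zrec node T pi xi n (node (T - n) w0)) (Qnode node T pi (T - n) (node (T - n) w0)).
Proof.
elim: n => [|n IH] w0 nT.
  rewrite subn0 /=; exact: HPv_U.
have e : (T - n = (T - n.+1).+1)%N by lia.
have tT : (T - n.+1 < T)%N by lia.
have HW : HPv (fun x => forall nu, isSucc node (T - n.+1) (node (T - n.+1) w0) nu ->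
                 Zrec node T pi xi n nu x)
              (fun x => forall nu, isSucc node (T - n.+1) (node (T - n.+1) w0) nu ->
                 Qnode node T pi (T - n.+1).+1 nu x).
  apply: (HPv_bigcap (F := {set Omega})) => nu [[w2 ->] _].
  rewrite -e; apply: IH; lia.
have HQ := HPv_Q (n := n.+1) w0 (t := (T - n.+1)%N) ltac:(lia).
have HV := HPv_sum HW HQ.
have HQs : forall nu, isSucc node (T - n.+1) (node (T - n.+1) w0) nu ->
    HPv (Qnode node T pi (T - n.+1).+1 nu) (Qnode node T pi (T - n.+1).+1 nu).
  move=> nu [[w2 ->] _]; apply: (HPv_Q (n := n)); lia.
apply: (HPv_conv (HPv_U w0 (ltnW tT)) HV) => x; split.
  move=> Qx; exists 0, x; split; last by rewrite add0r.
  by move=> nu [[w2 ->] _]; exact: Qnode_zero.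
move=> [a [c [Ca [Qc ->]]]].
have [k [u [hk [hu ->]]]] := Qstep_l tT Qc.
rewrite addrCA; apply: Qstep_r => // nu snu.
by apply: HPv_cone_add; [exact: HQs|exact: Ca|exact: hu].
Qed.

End Model.

Unset Implicit Arguments. Set Strict Implicit. Set Printing Implicit Defensive.

Theorem proposition5p2
  (R : realType) (Omega : finType) (d T : nat)
  (node : nat -> Omega -> {set Omega})
  (P : Omega -> R)
  (pi : nat -> Omega -> 'I_d -> 'I_d -> R)
  (xi : nat -> Omega -> 'rV[R]_d)
  (* filtration given by its atoms *)
  (Hnode_in : forall t w, w \in node t w)
  (Hnode_part : forall t w w', w' \in node t w -> node t w' = node t w)
  (Hnode_refine : forall t w, (t < T)%N -> node t.+1 w \subset node t w)
  (Hnode0 : forall w, node 0%N w = [set: Omega])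
  (HnodeT : forall w, node T w = [set w])
  (* probability with full support *)
  (HP_pos : forall w, 0 < P w)
  (HP_sum : \sum_w P w = 1)
  (* exchange rates *)
  (Hpi_pos : forall t w j k, (t <= T)%N -> 0 < pi t w j k)
  (Hpi_diag : forall t w j, (t <= T)%N -> pi t w j j = 1)
  (Hpi_adapt : forall t j k, (t <= T)%N ->
      adapted node t (fun w => pi t w j k))
  (* the American option is adapted *)
  (Hxi_adapt : forall t, (t <= T)%N -> adapted node t (xi t))
  (* no arbitrage *)
  (HNA : ~ exists (y : nat -> Omega -> 'rV[R]_d) (x : Omega -> 'rV[R]_d),
      (forall s, (1 <= s <= T.+1)%N -> adapted node s.-1 (y s)) /\
      (forall w, y 0%N w = 0) /\ (forall w, y T.+1 w = 0) /\
      (forall t, (t < T)%N -> inK node pi t (fun w => y t w - y t.+1 w)) /\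
      inK node pi T (fun w => y T w - x w) /\
      adapted node T x /\
      (forall w j, 0 <= x w 0 j) /\ (exists w, x w != 0)) :
  forall t mu, (t <= T)%N -> isNode node t mu ->
    polyhedral (Zbd node T pi xi t mu) /\
    (forall v, recession_cone (Zbd node T pi xi t mu) v <-> Qnode node T pi t mu v).
Proof.
Proof.
move=> t mu tT; rewrite /isNode => -[w0 ->].
have H := HPv_Z Hnode_in Hnode_part Hnode_refine Hpi_adapt Hxi_adapt w0 (leq_subr t T).
rewrite subKn // in H.
have Zu : forall n x, Ubd node T pi xi (T - n) (node t w0) x ->
    Zrec node T pi xi n (node t w0) x.
  case=> [|n] x hx /=; first by rewrite subn0 in hx.
  by apply: hull_sub; left.
have Z0 : Zbd node T pi xi t (node t w0) (- xi t w0 + 0).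
  rewrite /Zbd; apply: Zu; rewrite subKn //.
  by exists w0, 0; split; [exact: Hnode_in|split; [exact: Qnode_zero|]].
split; first exact: HPv_poly H.
move=> v; exact: HPv_rec H Z0 v.
Qed.
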